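(* Let $C=\ln 4/(\ln 4-1)\approx 3.588$. Let $\delta$ be a positive integer and let $G$ be a graph on $n$ vertices with minimum degree at least $\delta$, where $n\ge (C-1)\delta^2+(3C-1)\delta+2$. Then either $G=K_{\delta,n-\delta}$ or $i(G)<i(K_{\delta,n-\delta})$.
   Context: Graphs are simple, loopless and finite. $i(G)$ denotes the total number of independent sets in $G$ (including the empty set). $K_{a,b}$ is the complete bipartite graph with $a$ vertices in one part and $b$ in the other. *)

(* Defs.v *)
From mathcomp Require Import all_boot.
From Stdlib Require Import Reals.
Set Implicit Arguments. Unset Strict Implicit. Unset Printing Implicit Defensive.

Definition simple_graph (T : finType) (e : rel T) : Prop :=
  symmetric e /\ irreflexive e.

Definition indep (T : finType) (e : rel T) (S : {set T}) : bool :=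
  [forall x in S, forall y in S, ~~ e x y].

Definition num_indep (T : finType) (e : rel T) : nat :=
  #|[set S : {set T} | indep e S]|.

Definition min_deg_ge (T : finType) (e : rel T) (d : nat) : Prop :=
  forall x : T, d <= #|[set y | e x y]|.

Definition Kab_rel (a b : nat) : rel ('I_a + 'I_b)%type :=
  fun u v => match u, v with
             | inl _, inr _ => true
             | inr _, inl _ => true
             | _, _ => false
             end.

Definition graph_iso (T T' : finType) (e : rel T) (e' : rel T') : Prop :=
  exists f : T -> T', bijective f /\ forall x y, e' (f x) (f y) = e x y.

Definition Cconst : R := (ln 4 / (ln 4 - 1))%R.

Definition n_large (n d : nat) : Prop :=
  (INR n >= (Cconst - 1) * INR d ^ 2 + (3 * Cconst - 1) * INR d + 2)%R.

(* Main.v *)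
Require Import Defs.
From mathcomp Require Import all_boot zify.
From Stdlib Require Import Reals Lra Lia.

Lemma nlarge_nat n d : 0 < d -> n_large n d -> 4*d + 5 <= n.
Proof.
move=> d0; rewrite /n_large /Cconst => H.
have e2 : (2 < exp 1)%R by have := exp_ineq1 1 ltac:(lra); lra.
have e3 := exp_le_3.
have L1 : (1 < ln 4)%R.
  rewrite -[X in (X < _)%R]ln_exp; apply: ln_increasing; [apply: exp_pos| lra].
have L2 : (ln 4 < 2)%R.
  have -> : (2 = ln (exp 1 * exp 1))%R by rewrite ln_mult ?ln_exp; try lra; apply: exp_pos.
  apply: ln_increasing; nra.
set L := ln 4 in L1 L2 H.
have C2 : (2 < L / (L - 1))%R.
  have E : (L / (L - 1) * (L - 1) = L)%R by field; lra.
  nra.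
have D1 : (1 <= INR d)%R by apply: (le_INR 1); apply/leP.
have : (INR (Nat.add (Nat.mul 4 d) 4) < INR n)%R.
  rewrite plus_INR mult_INR /=. nra.
move/INR_lt => /ltP. lia.
Qed.
Lemma sum_eq_lt (a K : nat) : \sum_(k < K) (a == k :> nat) = (a < K).
Proof.
elim: K => [|K IH]; first by rewrite big_ord0.
rewrite big_ord_recr /= IH ltnS (leq_eqVlt a K).
by case: ltngtP.
Qed.

Lemma size_split (U : finType) (P : {set {set U}}) K :
  \sum_(k < K) #|[set S in P | #|S| == k]| = \sum_(S in P) (#|S| < K).
Proof.
transitivity (\sum_(k < K) \sum_(S in P) (#|S| == k)).
  apply: eq_bigr => k _; rewrite -sum1_card big_mkcond /=.
  rewrite [in RHS]big_mkcond /=; apply: eq_bigr => S _; rewrite !inE.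
  by case: (S \in P); case: (#|S| == k).
rewrite exchange_big /=; apply: eq_bigr => S _; exact: sum_eq_lt.
Qed.

Lemma card_set_le (U : finType) (P : {set {set U}}) K :
  \sum_(k < K) #|[set S in P | #|S| == k]| <= #|P|.
Proof.
rewrite size_split -sum1_card; apply: leq_sum => S _; by case: (_ < _).
Qed.

Lemma card_set_eq (U : finType) (P : {set {set U}}) :
  \sum_(k < #|U|.+1) #|[set S in P | #|S| == k]| = #|P|.
Proof.
rewrite size_split -sum1_card; apply: eq_bigr => S _.
by rewrite ltnS max_card.
Qed.

Lemma sum_bin_le N K : \sum_(j < K) 'C(N, j) <= expn 2 N.
Proof.
have E : \sum_(j < K) 'C(N, j) =
  \sum_(k < K) #|[set S in powerset [set: 'I_N] | #|S| == k]|.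
  apply: eq_bigr => j _; rewrite -[X in 'C(X, _)]card_ord -card_draws.
  by apply: eq_card => S; rewrite !inE subsetT.
rewrite E; apply: leq_trans (card_set_le _ _ _) _.
by rewrite card_powerset cardsT card_ord.
Qed.
Lemma Kab_lb a b : expn 2 a + expn 2 b - 1 <= num_indep (@Kab_rel a b).
Proof.
pose L := [set u : ('I_a + 'I_b)%type | if u is inl _ then true else false].
pose R := [set u : ('I_a + 'I_b)%type | if u is inl _ then false else true].
have cL : #|L| = a.
  have -> : L = inl @: [set: 'I_a].
    apply/setP => u; rewrite !inE; case: u => [i|i].
      by rewrite imset_f.
    by apply/esym/imsetP => -[j _].
  by rewrite card_imset ?cardsT ?card_ord // => x y [].
have cR : #|R| = b.
  have -> : R = inr @: [set: 'I_b].
    apply/setP => u; rewrite !inE; case: u => [i|i].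
      by apply/esym/imsetP => -[j _].
    by rewrite imset_f.
  by rewrite card_imset ?cardsT ?card_ord // => x y [].
have sub : powerset L :|: powerset R \subset [set S | indep (@Kab_rel a b) S].
  apply/subsetP => S; rewrite !inE => /orP [] sS; apply/forallP => x;
  apply/implyP => xS; apply/forallP => y; apply/implyP => yS.
    move: (subsetP sS x xS) (subsetP sS y yS); rewrite !inE.
    by case: x {xS} => // ?; case: y {yS}.
  move: (subsetP sS x xS) (subsetP sS y yS); rewrite !inE.
  by case: x {xS} => // ?; case: y {yS}.
apply: leq_trans (subset_leq_card sub).
rewrite cardsU !card_powerset cL cR leq_sub2l //.
rewrite (leq_trans (subset_leq_card (_ : _ \subset [set set0]))) ?cards1 //.
apply/subsetP => S; rewrite !inE => /andP [sL sR].
apply/eqP/setP => u; rewrite inE; apply/negP => uS.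
move: (subsetP sL u uS) (subsetP sR u uS); rewrite !inE.
by case: u {uS}.
Qed.
Lemma indepP (T : finType) (e : rel T) (S : {set T}) :
  reflect (forall y z, y \in S -> z \in S -> ~~ e y z) (indep e S).
Proof.
apply: (iffP forallP) => [H y z yS zS | H y].
  by move: (H y); rewrite yS /= => /forallP/(_ z); rewrite zS.
by apply/implyP => yS; apply/forallP => z; apply/implyP => zS; apply: H.
Qed.

Lemma caseA (T : finType) (e : rel T) (d : nat) (x : T) :
  simple_graph e -> 0 < d -> min_deg_ge e d ->
  #|[set y | e x y]| = d -> indep e [set y | (y != x) && ~~ e x y] ->
  graph_iso e (@Kab_rel d (#|T| - d)) \/
  num_indep e < num_indep (@Kab_rel d (#|T| - d)).
Proof.
move=> [sym irr] d0 mdeg cA /indepP indH.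
set A := [set y | e x y] in cA *.
set J := ~: A.
have xJ : x \in J by rewrite !inE irr.
have key : forall y a, y \in J -> a \in A -> e y a.
  move=> y a; rewrite !inE => nxy xa.
  have [->|ynx] := eqVneq y x; first by [].
  have sub : [set z | e y z] \subset A.
    apply/subsetP => z; rewrite !inE => yz; apply/negPn/negP => nxz.
    have [zx|znx] := eqVneq z x.
      by move: yz; rewrite zx sym (negbTE nxy).
    have := indH y z; rewrite !inE ynx nxy znx nxz /= => /(_ isT isT).
    by rewrite yz.
  have : [set z | e y z] == A by rewrite eqEcard sub cA mdeg.
  by move/eqP/setP/(_ a); rewrite !inE xa.
have noJ : forall y z, y \in J -> z \in J -> ~~ e y z.
  move=> y z; rewrite !inE => nxy nxz.
  have [->|ynx] := eqVneq y x; first by [].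
  have [->|znx] := eqVneq z x; first by rewrite sym.
  by apply: indH; rewrite !inE ?ynx ?znx ?nxy ?nxz.
have cJ : #|J| = #|T| - d by rewrite /J; have := cardsC A; rewrite cA; lia.
have dn : d <= #|T| by rewrite -cA max_card.
case: (boolP (indep e A)) => [/indepP indA | nindA].
  left.
  have [a0 a0A] : exists a0, a0 \in A.
    by apply/card_gt0P; rewrite cA.
  pose f (y : T) : ('I_d + 'I_(#|T| - d))%type :=
    if y \in A then inl (cast_ord cA (enum_rank_in a0A y))
    else inr (cast_ord cJ (enum_rank_in xJ y)).
  have finj : injective f.
    move=> y z; rewrite /f.
    case: (boolP (y \in A)) => yA; case: (boolP (z \in A)) => zA //.
      move=> [] /val_inj E.
      by rewrite -(enum_rankK_in a0A yA) -(enum_rankK_in a0A zA) E.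
    have yJ : y \in J by rewrite inE yA.
    have zJ : z \in J by rewrite inE zA.
    move=> [] /val_inj E.
    by rewrite -(enum_rankK_in xJ yJ) -(enum_rankK_in xJ zJ) E.
  exists f; split.
    apply: (@inj_card_bij _ _ f finj).
    by rewrite card_sum !card_ord; lia.
  move=> y z; rewrite /f.
  case: (boolP (y \in A)) => yA; case: (boolP (z \in A)) => zA /=.
  - by apply/esym/negbTE/indA.
  - by apply/esym; rewrite sym; apply: key => //; rewrite inE zA.
  - by apply/esym; apply: key => //; rewrite inE yA.
  - by apply/esym/negbTE/noJ; rewrite inE ?yA ?zA.
right.
apply: leq_trans (Kab_lb _ _).
have sub : [set S | indep e S] \subset powerset J :|: (powerset A :\: [set set0; A]).
  apply/subsetP => S; rewrite !inE => /indepP indS.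
  case: (boolP (S \subset J)) => //= /subsetPn [y yS yJ].
  have yA : y \in A by move: yJ; rewrite inE negbK.
  have SA : S \subset A.
    apply/subsetP => z zS; apply/negPn/negP => zA.
    have := indS z y zS yS; rewrite key //; by rewrite inE.
  rewrite SA andbT; apply/negP => /orP [/eqP S0|/eqP SAe].
    by move: yS; rewrite S0 inE.
  by move: nindA; rewrite -SAe; move/indepP: indS => ->.
have c2 : #|powerset A :\: [set set0; A]| = expn 2 d - 2.
  rewrite cardsD card_powerset cA.
  have -> : powerset A :&: [set set0; A] = [set set0; A].
    by apply/setIidPr/subsetP => S; rewrite !inE => /orP [] /eqP ->; rewrite ?sub0set ?subxx.
  rewrite cards2.
  have -> : (set0 != A) = true.
    apply/negP => /eqP A0; move: cA; rewrite -A0 cards0 => d00; by rewrite -d00 in d0.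
  by [].
have e2 : 1 < expn 2 d by case: (d) d0 => // d' _; rewrite expnS; have := expn_gt0 2 d'; lia.
rewrite /num_indep; apply: leq_ltn_trans (subset_leq_card sub) _.
apply: leq_ltn_trans (leq_card_setU _ _) _.
rewrite card_powerset c2 cJ; lia.
Qed.
Lemma card_dropY (U : finType) (F : {set {set U}}) (Y B : {set U}) j :
  (forall S, S \in F -> [/\ Y \subset S, S :\: Y \subset B & #|S| = j + #|Y|]) ->
  #|F| <= 'C(#|B|, j).
Proof.
move=> H.
rewrite -(@card_in_imset _ _ (fun S => S :\: Y)); last first.
  have K (S : {set U}) : Y \subset S -> Y :|: S :\: Y = S.
    by move=> YS; rewrite -{2}(setID S Y) (setIidPr YS).
  move=> S1 S2 /H [Y1 _ _] /H [Y2 _ _] E.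
  by rewrite -(K _ Y1) -(K _ Y2) E.
rewrite -cards_draws; apply: subset_leq_card; apply/subsetP => S' /imsetP [S /H [YS SB cS] ->].
rewrite inE SB /= cardsD (setIidPr YS) cS; apply/eqP; lia.
Qed.

Lemma perx (T : finType) (e : rel T) (d : nat) (x : T) j :
  simple_graph e -> min_deg_ge e d ->
  ~~ ((#|[set y | e x y]| == d) && indep e [set y | (y != x) && ~~ e x y]) ->
  #|[set S | [&& indep e S, #|S| == j.+1 & x \in S]]| <=
  'C((#|T| - d - 1).-1, j) + (if j is j'.+1 then 'C((#|T| - d - 1).-2, j') else 0).
Proof.
move=> [sym irr] mdeg nH.
set M := #|T| - d - 1.
set F := [set S | _].
set H := [set y | (y != x) && ~~ e x y].
have cH : #|H| + #|[set y | e x y]| + 1 = #|T|.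
  have -> : H = ~: (x |: [set y | e x y]).
    by apply/setP => y; rewrite !inE negb_or.
  have := cardsC (x |: [set y | e x y]); rewrite cardsU1 inE irr /=; lia.
have FP : forall S, S \in F -> [/\ indep e S, #|S| = j.+1, x \in S & S :\ x \subset H].
  move=> S; rewrite inE => /and3P [iS /eqP cS xS]; split => //.
  apply/subsetP => z; rewrite !inE => /andP [zx zS]; rewrite zx /=.
  by move/indepP: iS => /(_ x z xS zS).
have md := mdeg x.
case: (eqVneq #|[set y | e x y]| d) => [degd | degnd].
  move: nH; rewrite degd eqxx /= => /forallPn [u]; rewrite negb_imply => /andP [uH].
  move/forallPn => [v]; rewrite negb_imply negbK => /andP [vH euv].
  have uv : u != v by apply/eqP => E; move: euv; rewrite E irr.
  have cHv : #|H :\ v| = M.-1.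
    have := cardsD1 v H; rewrite vH; rewrite /M; lia.
  have cHuv : #|H :\ u :\ v| = M.-2.
    have := cardsD1 v (H :\ u); rewrite !inE eq_sym uv.
    have := cardsD1 u H; rewrite uH; move: vH; rewrite inE => -> /=. rewrite /M; lia.
  rewrite -(setID F [set S : {set T} | v \in S]) cardsU.
  apply: leq_trans (leq_subr _ _) _.
  rewrite addnC leq_add //.
    rewrite -cHv; apply: (@card_dropY _ _ [set x]) => S.
    rewrite in_setD [S \in [set _ : {set T} | _]]inE => /andP [vS /FP [iS cS xS sH]].
    split; first by rewrite sub1set.
      apply/subsetP => z zS; rewrite !inE; have zS' : z \in S :\ x by move: zS; rewrite !inE.
      idtac.
      have := subsetP sH z zS'; rewrite inE => ->; rewrite andbT.
      by apply/eqP => E; move: zS'; rewrite E in_setD1 (negbTE vS) andbF.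
    by rewrite cards1 addn1.
  case: j F FP => [|j'] F FP.
    rewrite leqn0 cards_eq0; apply/eqP/setP => S; rewrite in_set0 in_setI [S \in [set _ : {set T} | _]]inE.
    apply/negP => /andP [/FP [iS cS xS sH] vS].
    have : #|[set x; v]| <= #|S|.
      by apply: subset_leq_card; apply/subsetP => z; rewrite !inE => /orP [] /eqP ->.
    rewrite cS cards2; case: eqVneq => // E; move: vH; rewrite -E inE eqxx.
    done.
  rewrite -cHuv; apply: (@card_dropY _ _ [set x; v]) => S.
  rewrite in_setI [S \in [set _ : {set T} | _]]inE => /andP [/FP [iS cS xS sH] vS].
  have xv : x != v by apply/eqP => E; move: vH; rewrite -E inE eqxx.
  split.
  - by apply/subsetP => z; rewrite !inE => /orP [] /eqP ->.
  - apply/subsetP => z; rewrite !inE negb_or => /andP [/andP [zx zv] zS].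
    have zS' : z \in S :\ x by rewrite !inE zx.
    have := subsetP sH z zS'; rewrite inE => ->; rewrite zv /= andbT.
    apply/eqP => E; move/indepP: iS => /(_ z v zS vS); by rewrite E euv.
  - by rewrite cS cards2 xv addn2.
have ltd : d < #|[set y | e x y]| by rewrite ltn_neqAle eq_sym degnd md.
apply: leq_trans (leq_addr _ _).
apply: leq_trans (@card_dropY _ _ [set x] H j _) _.
  move=> S /FP [iS cS xS sH]; split => //; first by rewrite sub1set.
  by rewrite cards1 addn1.
apply: leq_bin2l; rewrite /M; lia.
Qed.
Lemma arith M j : 1 <= M ->
  M * M.-1 * ('C(M.-1, j) + (if j is j'.+1 then 'C(M.-2, j') else 0)) =
  j.+1 * 'C(M, j.+1) * (M.-1 + j).
Proof.
move=> M1.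
have E1 : M * 'C(M.-1, j) = j.+1 * 'C(M, j.+1) by rewrite mul_bin_diag.
case: j E1 => [|j'] E1.
  rewrite addn0 mulnAC E1; lia.
have E2 : M.-1 * 'C(M.-2, j') = j'.+1 * 'C(M.-1, j'.+1) by rewrite mul_bin_diag.
have E3 : M * M.-1 * 'C(M.-2, j') = j'.+1 * (j'.+2 * 'C(M, j'.+2)).
  by rewrite -mulnA E2 mulnCA E1.
rewrite mulnDr E3 mulnAC E1; lia.
Qed.

Lemma sum_main M K : 2 <= M ->
  \sum_(j < K) 'C(M, j.+1) * (M.-1 + j) <= M.-2 * expn 2 M + M * expn 2 M.-1.
Proof.
move=> M2.
have E : forall j, 'C(M, j.+1) * (M.-1 + j) = M.-2 * 'C(M, j.+1) + M * 'C(M.-1, j).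
  move=> j; rewrite mul_bin_diag.
  have -> : M.-1 + j = M.-2 + j.+1 by lia.
  by rewrite mulnDr mulnC [j.+1 * _]mulnC.
under eq_bigr => j _ do rewrite E.
rewrite big_split /= -!big_distrr /=.
apply: leq_add; apply: leq_mul => //; last exact: sum_bin_le.
apply: leq_trans (sum_bin_le M K.+1).
by rewrite big_ord_recl leq_addl.
Qed.
Lemma caseB (T : finType) (e : rel T) (d : nat) :
  simple_graph e -> min_deg_ge e d -> 4 * d + 5 <= #|T| ->
  (forall x, ~~ ((#|[set y | e x y]| == d) && indep e [set y | (y != x) && ~~ e x y])) ->
  num_indep e <= expn 2 (#|T| - d).
Proof.
move=> sg md nbig nA.
set n := #|T|.
set M := n - d - 1.
have M2 : 2 <= M by rewrite /M; lia.
set Ind := [set S | indep e S].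
have perj : forall j, M * M.-1 * #|[set S in Ind | #|S| == j.+1]| <=
                      n * ('C(M, j.+1) * (M.-1 + j)).
  move=> j.
  have dc : \sum_(x : T) #|[set S | [&& indep e S, #|S| == j.+1 & x \in S]]| =
            #|[set S in Ind | #|S| == j.+1]| * j.+1.
    transitivity (\sum_(x : T) \sum_(S in [set S in Ind | #|S| == j.+1]) (x \in S : nat)).
      apply: eq_bigr => x _; rewrite -sum1_card big_mkcond [RHS]big_mkcond /=.
      by apply: eq_bigr => S _; rewrite !inE; case: (indep e S); case: (_ == _); case: (x \in S).
    rewrite exchange_big /= -sum_nat_const; apply: eq_bigr => S; rewrite !inE => /andP [_ /eqP <-].
    by rewrite -sum1_card [in RHS]big_mkcond.
  rewrite -(@leq_pmul2l j.+1) //.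
  have -> : j.+1 * (M * M.-1 * #|[set S in Ind | #|S| == j.+1]|) =
     M * M.-1 * \sum_(x : T) #|[set S | [&& indep e S, #|S| == j.+1 & x \in S]]|.
    rewrite dc; lia.
  rewrite big_distrr /=.
  apply: leq_trans (_ : \sum_(x : T) j.+1 * 'C(M, j.+1) * (M.-1 + j) <= _).
    apply: leq_sum => x _; rewrite -arith; last by lia.
    rewrite leq_pmul2l; last by rewrite muln_gt0; apply/andP; split; lia.
    exact: perx.
  by rewrite sum_nat_const /n; rewrite -!mulnA; rewrite mulnCA.
have X0 : #|[set S in Ind | #|S| == 0]| <= 1.
  rewrite -(cards1 (@set0 T)); apply: subset_leq_card; apply/subsetP => S.
  by rewrite !inE cards_eq0 => /andP [_ ->].
have tot : M * M.-1 * #|Ind| <= M * M.-1 + n * (M.-2 * expn 2 M + M * expn 2 M.-1).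
  rewrite -card_set_eq big_ord_recl /= mulnDr.
  apply: leq_add; first by rewrite -[X in _ <= X]muln1 leq_mul2l X0 orbT.
  rewrite big_distrr /=.
  under eq_bigr => i _ do rewrite /bump leq0n add1n.
  apply: (@leq_trans (\sum_(j < #|T|) n * ('C(M, j.+1) * (M.-1 + j)))).
    by apply: leq_sum => j _; exact: perj.
  rewrite -big_distrr /= leq_mul2l; apply/orP; right.
  exact: sum_main.
have EM : expn 2 M = 2 * expn 2 M.-1 by rewrite -expnS; congr expn; lia.
have En : expn 2 (n - d) = 4 * expn 2 M.-1.
  by rewrite -(expnD 2 2); congr expn; rewrite /M; lia.
have P0 := expn_gt0 2 M.-1.
move: tot; rewrite /num_indep -/Ind En EM.
set P := expn 2 M.-1; set X := #|Ind| => tot.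
have ineq : n * (2 * M.-2 + M) < 4 * (M * M.-1) by rewrite /M; nia.
nia.
Qed.

Theorem mainTheorem3 (T : finType) (e : rel T) (d : nat) :
  simple_graph e -> 0 < d -> min_deg_ge e d -> n_large #|T| d ->
  graph_iso e (@Kab_rel d (#|T| - d)) \/
  num_indep e < num_indep (@Kab_rel d (#|T| - d)).
Proof.
move=> sg d0 md nl.
have nb := nlarge_nat _ _ d0 nl.
case: (boolP [exists x, (#|[set y | e x y]| == d) && indep e [set y | (y != x) && ~~ e x y]]).
  by case/existsP => x /andP [/eqP cx ix]; exact: (caseA _ _ _ _ sg d0 md cx ix).
rewrite negb_exists => /forallP nA.
right; apply: leq_ltn_trans (caseB _ _ _ sg md nb nA) _.
apply: leq_trans (Kab_lb _ _).
have e2 : 1 < expn 2 d by case: (d) d0 => // d' _; rewrite expnS; have := expn_gt0 2 d'; lia.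
lia.
Qed.
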